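(* Let $\{(x_i,y_i)\}_{i=1}^n\subset\mathcal X\times\mathcal Y$ be a dataset, let $\alpha\in(0,1)$, and let $\mathcal F$ be a nonempty family of deterministic classifiers $F:\mathcal X\to\mathcal Y$. For $F\in\mathcal F$ define the empirical zero-one risk $$\hat{\mathcal R}(F)=\frac1n\sum_{i=1}^n \mathbf 1_{\{F(x_i)\neq y_i\}}$$ and the $\alpha$-CVaR zero-one loss $$\mathrm{CVaR}_\alpha(F)=\max_{w\in\Delta_n,\ w_i\le \frac{1}{\alpha n}\ \forall i}\ \sum_{i=1}^n w_i\,\mathbf 1_{\{F(x_i)\neq y_i\}},$$ where $\Delta_n=\{w\in\mathbb R^n: w_i\ge 0,\ \sum_i w_i=1\}$. Let $F^*_{\mathrm{ERM}}=\arg\min_{F\in\mathcal F}\hat{\mathcal R}(F)$ and $F^*_{\mathrm{CVaR}_\alpha}=\arg\min_{F\in\mathcal F}\mathrm{CVaR}_\alpha(F)$. Then for every $F\in\mathcal F$ and every $F^*\in F^*_{\mathrm{ERM}}$ we have $\mathrm{CVaR}_\alpha(F)\ge \mathrm{CVaR}_\alpha(F^* )$. Moreover, if $\min_{F\in\mathcal F}\hat{\mathcal R}(F)<\alpha$, then $F^*_{\mathrm{ERM}}=F^*_{\mathrm{CVaR}_\alpha}$.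
   Context: A deterministic classifier is a fixed map $F:\mathcal X\to\mathcal Y$. The zero-one loss is $\ell_{0/1}(\hat y,y)=\mathbf 1_{\{\hat y\neq y\}}$. *)

(* Defs.v *)
From HB Require Import structures.
From mathcomp Require Import all_boot all_order all_algebra.
From mathcomp Require Import boolp classical_sets reals.
Set Implicit Arguments. Unset Strict Implicit. Unset Printing Implicit Defensive.
Import Order.TTheory GRing.Theory Num.Theory.
Local Open Scope ring_scope.
Local Open Scope classical_set_scope.

Section Defs.
Variables (R : realType) (X : Type) (Y : eqType) (n : nat).
Variables (x : 'I_n -> X) (y : 'I_n -> Y).

Definition loss01 (F : X -> Y) (i : 'I_n) : R := (F (x i) != y i)%:R.

Definition emp_risk (F : X -> Y) : R := n%:R^-1 * \sum_(i < n) loss01 F i.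

Definition cvar_weights (alpha : R) : set ('I_n -> R) :=
  [set w | (forall i, 0 <= w i) /\ \sum_(i < n) w i = 1 /\
           (forall i, w i <= (alpha * n%:R)^-1)].

(* alpha-CVaR zero-one loss: the max (taken as sup; it is attained) *)
Definition cvar01 (alpha : R) (F : X -> Y) : R :=
  sup [set \sum_(i < n) w i * loss01 F i | w in cvar_weights alpha].

Definition argmin_on (Fam : set (X -> Y)) (J : (X -> Y) -> R) : set (X -> Y) :=
  [set F | Fam F /\ forall G, Fam G -> J F <= J G].

Definition ERM_set (Fam : set (X -> Y)) := argmin_on Fam emp_risk.
Definition CVaR_set (alpha : R) (Fam : set (X -> Y)) := argmin_on Fam (cvar01 alpha).
End Defs.

(* Main.v *)
Require Import Defs.
From HB Require Import structures.
From mathcomp Require Import all_boot all_order all_algebra.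
From mathcomp Require Import boolp classical_sets reals.
From mathcomp Require Import ring lra.
Import Order.TTheory GRing.Theory Num.Theory.
Local Open Scope ring_scope.
Local Open Scope classical_set_scope.

Lemma sup_attained (R : realType) (E : set R) v :
  E v -> ubound E v -> sup E = v.
Proof.
move=> Ev ub; apply/le_anti/andP; split.
  by apply: ge_sup => //; exists v.
by apply: sup_upper_bound => //; split; [exists v | exists v].
Qed.

Lemma loss01_01 (R : realType) X (Y : eqType) n (x : 'I_n -> X) (y : 'I_n -> Y)
  F i : @loss01 R X Y n x y F i = 0 \/ @loss01 R X Y n x y F i = 1.
Proof. rewrite /loss01; case: (F (x i) != y i); [right|left]; done. Qed.
Arguments loss01_01 {R X Y n} x y F i.

Lemma cvar_eq (R : realType) X (Y : eqType) n (x : 'I_n -> X) (y : 'I_n -> Y)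
  (alpha : R) F :
  (0 < n)%N -> 0 < alpha -> alpha < 1 ->
  let m := \sum_(i < n) @loss01 R X Y n x y F i in
  let c := (alpha * n%:R)^-1 in
  @cvar01 R X Y n x y alpha F = if m * c <= 1 then m * c else 1.
Proof.
move=> n0 a0 a1 m c.
set L := @loss01 R X Y n x y F.
have nR : 0 < n%:R :> R by rewrite ltr0n.
have c0 : 0 < c by rewrite /c invr_gt0 mulr_gt0.
have nc1 : 1 < n%:R * c.
  rewrite /c invfM mulrCA divff ?gt_eqF // mulr1.
  by rewrite invf_gt1.
have L2 : forall i, L i * L i = L i.
  by move=> i; rewrite /L; case: (loss01_01 (R:=R) x y F i) => ->; rewrite ?mulr0 ?mulr1.
have L01 : forall i, 0 <= L i /\ L i <= 1.
  by move=> i; rewrite /L; case: (loss01_01 (R:=R) x y F i) => ->; lra.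
have m0 : 0 <= m by apply: sumr_ge0 => i _; case: (L01 i).
have sum1 : \sum_(i < n) (1 : R) = n%:R by rewrite sumr_const card_ord.
apply: sup_attained.
- case: ifP => hm.
  + have mn : m < n%:R.
      rewrite ltNge; apply/negP => nm.
      have : n%:R * c <= m * c by rewrite ler_pM2r.
      lra.
    pose s := (1 - m * c) / (n%:R - m).
    have s0 : 0 <= s by rewrite /s divr_ge0 //; lra.
    have sc : s <= c.
      rewrite /s ler_pdivrMr; last lra.
      lra.
    exists (fun i => c * L i + s * (1 - L i)).
      split; [|split].
      * move=> i; case: (L01 i) => ? ?.
        apply: addr_ge0; [apply: mulr_ge0; lra | apply: mulr_ge0; lra].
      * rewrite big_split /= -!mulr_sumr sumrB sum1 -/m /s.
        field; lra.
      * move=> i; rewrite /L; case: (loss01_01 (R:=R) x y F i) => ->.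
          by rewrite mulr0 add0r subr0 mulr1.
        by rewrite mulr1 subrr mulr0 addr0.
    rewrite -/L.
    under eq_bigr => i _ do rewrite mulrDl -mulrA L2 -mulrA mulrBl mul1r L2 subrr mulr0 addr0.
    by rewrite -mulr_sumr mulrC.
  + have mpos : 0 < m.
      rewrite lt_neqAle m0 andbT; apply/negP => /eqP m00.
      by move: hm; rewrite -m00 mul0r ler01.
    exists (fun i => L i / m).
      split; [|split].
      * by move=> i; case: (L01 i) => ? ?; apply: divr_ge0 => //; lra.
      * by rewrite -mulr_suml -/m divff // gt_eqF.
      * move=> i; case: (L01 i) => ? ?.
        rewrite -/c; apply: (@le_trans _ _ m^-1).
          by rewrite ler_pdivrMr // mulVf ?gt_eqF.
        rewrite -(ler_pM2l mpos) divff ?gt_eqF //.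
        move/negbT: hm; rewrite -ltNge => ?; lra.
    under eq_bigr => i _ do rewrite mulrAC L2.
    by rewrite -mulr_suml -/m divff // gt_eqF.
- move=> _ [w [w0 [w1 wc]] <-].
  have h1 : \sum_(i < n) w i * L i <= 1.
    rewrite -w1; apply: ler_sum => i _.
    case: (L01 i) => ? ?; rewrite -{2}(mulr1 (w i)); apply: ler_wpM2l => //.
  have h2 : \sum_(i < n) w i * L i <= m * c.
    rewrite /m mulr_suml; apply: ler_sum => i _.
    rewrite mulrC; apply: ler_wpM2l; [by case: (L01 i) | exact: wc].
  by case: ifP.
Qed.

Theorem proposition1 (R : realType) (X : Type) (Y : eqType) (n : nat)
    (x : 'I_n -> X) (y : 'I_n -> Y) (alpha : R) (Fam : set (X -> Y)) :
  (0 < n)%N -> 0 < alpha -> alpha < 1 -> Fam !=set0 ->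
  (forall F Fs, Fam F -> @ERM_set R X Y n x y Fam Fs ->
     @cvar01 R X Y n x y alpha Fs <= @cvar01 R X Y n x y alpha F) /\
  ((exists F0, @ERM_set R X Y n x y Fam F0 /\ @emp_risk R X Y n x y F0 < alpha) ->
     @ERM_set R X Y n x y Fam = @CVaR_set R X Y n x y alpha Fam).
Proof.
move=> n0 a0 a1 _.
set M := fun F => \sum_(i < n) @loss01 R X Y n x y F i.
set c := (alpha * n%:R)^-1.
have nR : 0 < n%:R :> R by rewrite ltr0n.
have c0 : 0 < c by rewrite /c invr_gt0 mulr_gt0.
have CE : forall F, @cvar01 R X Y n x y alpha F = if M F * c <= 1 then M F * c else 1.
  by move=> F; rewrite cvar_eq.
have EE : forall F G, @emp_risk R X Y n x y F <= @emp_risk R X Y n x y G -> M F <= M G.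
  by move=> F G; rewrite /emp_risk ler_pM2l ?invr_gt0.
have mono : forall F G, M F <= M G -> @cvar01 R X Y n x y alpha F <= @cvar01 R X Y n x y alpha G.
  move=> F G h; rewrite !CE.
  have : M F * c <= M G * c by rewrite ler_pM2r.
  case: ifP => h1; case: ifP => h2 h3; rewrite ?lexx //;
    try (move/negbT: h1; rewrite -ltNge => h1);
    try (move/negbT: h2; rewrite -ltNge => h2); lra.
have P1 : forall F Fs, Fam F -> @ERM_set R X Y n x y Fam Fs ->
     @cvar01 R X Y n x y alpha Fs <= @cvar01 R X Y n x y alpha F.
  by move=> F Fs FF [_ H]; apply: mono; apply: EE; apply: H.
split => //.
move=> [F0 [[FF0 H0] r0]].
have m0 : M F0 * c < 1.
  have -> : M F0 * c = @emp_risk R X Y n x y F0 / alpha.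
    by rewrite /c /emp_risk /M; field; rewrite ?gt_eqF.
  by rewrite ltr_pdivrMr // mul1r.
rewrite /ERM_set /CVaR_set /argmin_on.
apply/seteqP; split => G [FG HG]; split => //.
  by move=> G' FG'; apply: P1 => //; split.
move=> G' FG'.
have hG := HG F0 FF0.
have : M G * c <= M F0 * c.
  move: hG; rewrite !CE.
  case: ifP => h1; case: ifP => h2 h3 //;
    try (move/negbT: h1; rewrite -ltNge => h1);
    try (move/negbT: h2; rewrite -ltNge => h2); lra.
rewrite ler_pM2r // => h.
rewrite /emp_risk ler_pM2l ?invr_gt0 //.
apply: (le_trans h); have := H0 G' FG'; rewrite /emp_risk ler_pM2l ?invr_gt0 //.
Qed.
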